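(* Consider the single-path uplink system and problem in the context (antenna-moving-region constraints omitted), and assume $K(K-1)/2\le I_M+I_N$. Let $\mathcal{P}_1,\mathcal{P}_2$ be any partition of $\mathcal{P}=\{(k,q):1\le k<q\le K\}$ with $|\mathcal{P}_1|\le I_M$ and $|\mathcal{P}_2|\le I_N$, with elements enumerated as $\mathcal{P}_1=\{(k_1^{(i)},q_1^{(i)})\}_{i=1}^{|\mathcal{P}_1|}$ and $\mathcal{P}_2=\{(k_2^{(i)},q_2^{(i)})\}_{i=1}^{|\mathcal{P}_2|}$. Define $\mathbf{d}_x\in\mathbb{R}^{I_M}$ and $\mathbf{d}_y\in\mathbb{R}^{I_N}$ recursively by $$[\mathbf{d}_x]_i=\begin{cases}\dfrac{(\rho_i+1/m_i)\lambda}{|\vartheta_{k_1^{(i)}}-\vartheta_{q_1^{(i)}}|}, & 1\le i\le|\mathcal{P}_1|,\\[2mm] \sum_{j=1}^{i-1}(m_j-1)[\mathbf{d}_x]_j+d_{\min,x}, & |\mathcal{P}_1|+1\le i\le I_M,\end{cases}$$ $$[\mathbf{d}_y]_i=\begin{cases}\dfrac{(\tau_i+1/n_i)\lambda}{|\varphi_{k_2^{(i)}}-\varphi_{q_2^{(i)}}|}, & 1\le i\le|\mathcal{P}_2|,\\[2mm] \sum_{j=1}^{i-1}(n_j-1)[\mathbf{d}_y]_j+d_{\min,y}, & |\mathcal{P}_2|+1\le i\le I_N,\end{cases}$$ where $\rho_i$ is the smallest nonnegative integer such that $[\mathbf{d}_x]_i\ge\sum_{j=1}^{i-1}(m_j-1)[\mathbf{d}_x]_j+d_{\min,x}$,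 and $\tau_i$ is the smallest nonnegative integer such that $[\mathbf{d}_y]_i\ge\sum_{j=1}^{i-1}(n_j-1)[\mathbf{d}_y]_j+d_{\min,y}$. Then $\mathbf{x}^\star=\mathbf{U}^{\mathrm T}\mathbf{d}_x$ and $\mathbf{y}^\star=\mathbf{V}^{\mathrm T}\mathbf{d}_y$ are optimal APVs for the problem: there exist $\mathbf{W}$ and $\mathbf{p}$ such that $(\mathbf{x}^\star,\mathbf{y}^\star,\mathbf{W},\mathbf{p})$ is an optimal solution, attaining total transmit power $\sum_{k=1}^K\frac{\sigma^2(2^{r_k}-1)}{MN|b_k|^2}$.
   Context: A base station has a cross-linked movable antenna array with $M$ columns and $N$ rows; horizontal APV $\mathbf{x}=[x_1,\dots,x_M]^{\mathrm T}\in\mathbb{R}^M$, vertical APV $\mathbf{y}=[y_1,\dots,y_N]^{\mathrm T}\in\mathbb{R}^N$, antenna $(m,n)$ at $(x_m,y_n)$. $K$ single-antenna users; user $k$ has a single path with coefficient $b_k\ne0$ and virtual angles $\vartheta_k,\varphi_k\in[-1,1]$, with $\vartheta_k\ne\vartheta_q$ and $\varphi_k\ne\varphi_q$ for $k\ne q$. With wavelength $\lambda>0$, $\mathbf{h}_k(\mathbf{x},\mathbf{y})=b_k\,\mathbf{a}^{\mathrm{hor}}_k(\mathbf{x})\otimes\mathbf{a}^{\mathrm{ver}}_k(\mathbf{y})$, $\mathbf{a}^{\mathrm{hor}}_k(\mathbf{x})=[e^{-\mathrm{j}\frac{2\pi}{\lambda}x_m\vartheta_k}]_{m=1}^M$,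 $\mathbf{a}^{\mathrm{ver}}_k(\mathbf{y})=[e^{-\mathrm{j}\frac{2\pi}{\lambda}y_n\varphi_k}]_{n=1}^N$. With combining matrix $\mathbf{W}=[\mathbf{w}_1,\dots,\mathbf{w}_K]\in\mathbb{C}^{MN\times K}$, powers $p_k$, noise power $\sigma^2>0$, SINR $\gamma_k=\frac{|\mathbf{w}_k^{\mathrm H}\mathbf{h}_k|^2p_k}{\sum_{q\ne k}|\mathbf{w}_k^{\mathrm H}\mathbf{h}_q|^2p_q+\|\mathbf{w}_k\|_2^2\sigma^2}$. The problem: minimize $\sum_k p_k$ over $\mathbf{x},\mathbf{y},\mathbf{W},\mathbf{p}$ subject to $\log_2(1+\gamma_k)\ge r_k$, $p_k\ge0$ (given $r_k\ge0$), $x_{m+1}-x_m\ge d_{\min,x}$ ($1\le m\le M-1$), $y_{n+1}-y_n\ge d_{\min,y}$ ($1\le n\le N-1$), given $d_{\min,x},d_{\min,y}>0$ (no bounds on the moving region). Factorization notation: write $M=\prod_{i=1}^{I_M}m_i$ with primes $m_1\le\dots\le m_{I_M}$ ($I_M$ = number of prime factors with multiplicity); set $M_1=1$, $M_i=\prod_{j=1}^{i-1}m_j$ ($2\le i\le I_M$), $\mathbf{m}=[M_1,\dots,M_{I_M}]^{\mathrm T}$. Each integer $1\le m\le M$ is written uniquely as $m=\mathbf{u}_m^{\mathrm T}\mathbf{m}+1$ with $\mathbf{u}_m\in\mathbb{Z}^{I_M}$, $0\le[\mathbf{u}_m]_i<m_i$ (mixed-radix digits of $m-1$); $\mathbf{U}=[\mathbf{u}_1,\dots,\mathbf{u}_M]\in\mathbb{Z}^{I_M\times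 M}$. Analogously $N=\prod_{i=1}^{I_N}n_i$ with primes $n_1\le\dots\le n_{I_N}$, $N_1=1$, $N_i=\prod_{j=1}^{i-1}n_j$, $\mathbf{n}=[N_1,\dots,N_{I_N}]^{\mathrm T}$, $n=\mathbf{v}_n^{\mathrm T}\mathbf{n}+1$ with $0\le[\mathbf{v}_n]_i<n_i$, $\mathbf{V}=[\mathbf{v}_1,\dots,\mathbf{v}_N]\in\mathbb{Z}^{I_N\times N}$. *)

(* Defs.v *)
From HB Require Import structures.
From mathcomp Require Import all_boot all_order all_algebra.
From mathcomp Require Import all_classical all_reals.
From mathcomp Require Import exp trigo.
From mathcomp Require Import complex.
Set Implicit Arguments. Unset Strict Implicit. Unset Printing Implicit Defensive.
Import Order.TTheory GRing.Theory Num.Theory.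
Local Open Scope ring_scope.

Section Defs.
Variable R : realType.
Local Notation C := R[i].

(* prime factors of n with multiplicity, in nondecreasing order:
   [m_1; ...; m_{I}] with m_1 <= ... <= m_I and prod = n *)
Definition pfactors (n : nat) : seq nat :=
  flatten [seq nseq pe.2 pe.1 | pe <- prime_decomp n].

Definition radix (fac : seq nat) (i : nat) : nat :=
  \prod_(j < i) nth 1%N fac j.

(* [u_m]_i : i-th mixed-radix digit of (m-1); here m0 = m - 1 (0-based) *)
Definition digit (fac : seq nat) (m0 i : nat) : nat :=
  ((m0 %/ radix fac i) %% nth 1%N fac i)%N.

(* x* = U^T d  :  x*_m = sum_i [u_m]_i [d]_i *)
Definition apv (fac : seq nat) (d : nat -> R) (m0 : nat) : R :=
  \sum_(i < size fac) (digit fac m0 i)%:R * d i.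

Definition Sprev (fac : seq nat) (d : nat -> R) (i : nat) : R :=
  \sum_(j < i) ((nth 1%N fac j)%:R - 1) * d j.

(* recursive definition of d_x (resp. d_y): 'delta' is the list
   |theta_{k^(i)} - theta_{q^(i)}| for the enumerated pairs of P_1 (resp. P_2) *)
Definition dvec_spec (fac : seq nat) (delta : seq R) (lam dmin : R)
    (d : nat -> R) : Prop :=
  forall i : nat, (i < size fac)%N ->
    if (i < size delta)%N then
      exists rho : nat,
        d i = (rho%:R + 1 / (nth 1%N fac i)%:R) * lam / nth 0 delta i /\
        Sprev fac d i + dmin <= d i /\
        (forall r : nat, (r < rho)%N ->
           (r%:R + 1 / (nth 1%N fac i)%:R) * lam / nth 0 delta i
             < Sprev fac d i + dmin)
    else d i = Sprev fac d i + dmin.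

Definition expj (t : R) : C := Complex (cos t) (sin t).
Definition abs2 (z : C) : R := complex.Re z ^+ 2 + complex.Im z ^+ 2.

(* channel of user k, entry (m,n) of a^hor_k(x) (x) a^ver_k(y), times b_k *)
Definition chan (M N K : nat) (lam : R) (b : 'I_K -> C) (theta phi : 'I_K -> R)
    (x : 'I_M -> R) (y : 'I_N -> R) (k : 'I_K) (m : 'I_M) (n : 'I_N) : C :=
  b k * expj (- (2 * pi / lam) * x m * theta k)
      * expj (- (2 * pi / lam) * y n * phi k).

Definition inner (M N : nat) (w h : 'I_M -> 'I_N -> C) : C :=
  \sum_(m < M) \sum_(n < N) conjc (w m n) * h m n.

Definition norm2 (M N : nat) (w : 'I_M -> 'I_N -> C) : R :=
  \sum_(m < M) \sum_(n < N) abs2 (w m n).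

Definition sinr (M N K : nat) (lam sigma2 : R) (b : 'I_K -> C)
    (theta phi : 'I_K -> R) (x : 'I_M -> R) (y : 'I_N -> R)
    (W : 'I_K -> 'I_M -> 'I_N -> C) (p : 'I_K -> R) (k : 'I_K) : R :=
  let h := chan lam b theta phi x y in
  abs2 (inner (W k) (h k)) * p k /
  (\sum_(q < K | q != k) abs2 (inner (W k) (h q)) * p q
   + norm2 (W k) * sigma2).

Definition log2 (t : R) : R := ln t / ln 2.

Definition feasible (M N K : nat) (lam sigma2 dminx dminy : R) (b : 'I_K -> C)
    (theta phi r : 'I_K -> R) (x : 'I_M -> R) (y : 'I_N -> R)
    (W : 'I_K -> 'I_M -> 'I_N -> C) (p : 'I_K -> R) : Prop :=
  (forall k, r k <= log2 (1 + sinr lam sigma2 b theta phi x y W p k)) /\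
  (forall k, 0 <= p k) /\
  (forall m1 m2 : 'I_M, m2 = m1.+1 :> nat -> dminx <= x m2 - x m1) /\
  (forall n1 n2 : 'I_N, n2 = n1.+1 :> nat -> dminy <= y n2 - y n1).

Definition user_pairs (K : nat) : seq ('I_K * 'I_K) :=
  [seq kq : 'I_K * 'I_K <- [seq (k, q) | k <- enum 'I_K, q <- enum 'I_K] | (kq.1 < kq.2)%N].

End Defs.

(* Main.v *)
Require Import Defs.
From HB Require Import structures.
From mathcomp Require Import all_boot all_order all_algebra.
From mathcomp Require Import all_classical all_reals.
From mathcomp Require Import sequences exp trigo.
From mathcomp Require Import complex.
From mathcomp Require Import ring lra zify.
Import Order.TTheory GRing.Theory Num.Theory.
Local Open Scope ring_scope.

Section Cplx.
Variable R : realType.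
Local Notation C := R[i].

Lemma expjD (a b : R) : expj (a + b) = expj a * expj b.
Proof. rewrite /expj cosD sinD; simpc. congr Complex; ring. Qed.

Lemma abs2M (x y : C) : abs2 (x * y) = abs2 x * abs2 y.
Proof. case: x => a b; case: y => c d; rewrite /abs2; simpc => /=. ring. Qed.

Lemma abs2_ge0 (x : C) : 0 <= abs2 x.
Proof. by rewrite /abs2 addr_ge0 // sqr_ge0. Qed.

Lemma abs2_eq0 (x : C) : abs2 x = 0 -> x = 0.
Proof.
case: x => a b; rewrite /abs2 /= => H.
have Ha : a ^+ 2 = 0 by apply/eqP; rewrite eq_le sqr_ge0 andbT -H lerDl sqr_ge0.
have Hb : b ^+ 2 = 0 by apply/eqP; rewrite eq_le sqr_ge0 andbT -H lerDr sqr_ge0.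
move/eqP: Ha; rewrite sqrf_eq0 => /eqP ->; move/eqP: Hb; rewrite sqrf_eq0 => /eqP ->.
by [].
Qed.

Lemma abs2_expj (t : R) : abs2 (expj t) = 1.
Proof. by rewrite /abs2 /= cos2Dsin2. Qed.

Lemma abs2_real (t : R) : abs2 ((t%:C)%C) = t ^+ 2.
Proof. rewrite /abs2 /=. ring. Qed.

Lemma abs20 : abs2 (0 : C) = 0.
Proof. rewrite /abs2 /=. ring. Qed.

Lemma conj_expj (t : R) : conjc (expj t) = expj (- t).
Proof. by rewrite /expj /= cosN sinN. Qed.

Lemma conjM_abs2 (x : C) : conjc x * x = ((abs2 x)%:C)%C.
Proof. case: x => a b; rewrite /abs2; simpc => /=. congr Complex; ring. Qed.

Lemma expj0 : expj (0 : R) = 1.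
Proof. by rewrite /expj cos0 sin0. Qed.

Lemma expjMn (n : nat) (t : R) : expj (n%:R * t) = expj t ^+ n.
Proof.
elim: n => [|n IH]; first by rewrite mul0r expj0 expr0.
by rewrite -addn1 natrD mulrDl mul1r expjD IH addn1 exprSr.
Qed.

Lemma expj2pin (n : nat) : expj (n%:R * (pi *+ 2) : R) = 1.
Proof.
rewrite expjMn.
have -> : expj (pi *+ 2 : R) = 1 by rewrite /expj cos2pi sin2pi.
by rewrite expr1n.
Qed.

Lemma expjN (t : R) : expj (- t) * expj t = 1.
Proof. by rewrite -expjD addNr expj0. Qed.

Lemma ReD (x y : C) : complex.Re (x + y) = complex.Re x + complex.Re y.
Proof. by case: x => a b; case: y => c d. Qed.
Lemma ImD (x y : C) : complex.Im (x + y) = complex.Im x + complex.Im y.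
Proof. by case: x => a b; case: y => c d. Qed.

Lemma Re_sum (T : Type) (r : seq T) (P : pred T) (F : T -> C) :
  complex.Re (\sum_(t <- r | P t) F t) = \sum_(t <- r | P t) complex.Re (F t).
Proof. exact: (big_morph _ ReD (erefl _)). Qed.
Lemma Im_sum (T : Type) (r : seq T) (P : pred T) (F : T -> C) :
  complex.Im (\sum_(t <- r | P t) F t) = \sum_(t <- r | P t) complex.Im (F t).
Proof. exact: (big_morph _ ImD (erefl _)). Qed.

Lemma CS (T : finType) (w h : T -> C) :
  abs2 (\sum_t conjc (w t) * h t) <= (\sum_t abs2 (w t)) * (\sum_t abs2 (h t)).
Proof.
pose a t := complex.Re (w t). pose b t := complex.Im (w t).
pose c t := complex.Re (h t). pose d t := complex.Im (h t).
pose X t := a t * c t + b t * d t. pose Y t := a t * d t - b t * c t.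
pose f t := a t ^+ 2 + b t ^+ 2. pose g t := c t ^+ 2 + d t ^+ 2.
have E1 : abs2 (\sum_t conjc (w t) * h t) = (\sum_t X t) ^+ 2 + (\sum_t Y t) ^+ 2.
  rewrite /abs2 Re_sum Im_sum; congr (_ ^+ 2 + _ ^+ 2); apply: eq_bigr => t _;
  rewrite /X /Y /a /b /c /d; case: (w t) => ? ?; case: (h t) => ? ?; simpc => /=; ring.
have E2 : (\sum_t abs2 (w t)) * (\sum_t abs2 (h t)) = (\sum_t f t) * (\sum_t g t) by [].
rewrite E1 E2.
pose B s t := f s * g t + f t * g s - 2 * (X s * X t + Y s * Y t).
have HB : 0 <= \sum_s \sum_t B s t.
  apply: sumr_ge0 => s _; apply: sumr_ge0 => t _.
  have -> : B s t = (c s * a t - d s * b t - c t * a s + d t * b s) ^+ 2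
                   + (c s * b t + d s * a t - c t * b s - d t * a s) ^+ 2.
    rewrite /B /f /g /X /Y; ring.
  by rewrite addr_ge0 // sqr_ge0.
have HE : \sum_s \sum_t B s t = 2 * ((\sum_t f t) * (\sum_t g t))
              - 2 * ((\sum_t X t) ^+ 2 + (\sum_t Y t) ^+ 2).
  have e1 : \sum_s \sum_t B s t = \sum_s \sum_t (f s * g t) + \sum_s \sum_t (f t * g s)
      - 2 * (\sum_s \sum_t (X s * X t) + \sum_s \sum_t (Y s * Y t)).
    rewrite /B. under eq_bigr do rewrite sumrB big_split /= -(mulr_sumr _ _ _ 2) big_split /=.
    by rewrite sumrB big_split /= -(mulr_sumr _ _ _ 2) big_split /=.
  rewrite e1 -!big_distrlr /= exchange_big /= -big_distrlr /=; ring.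
lra.
Qed.

End Cplx.

Section Omega.
Variable R : realType.
Local Notation C := R[i].

Lemma geo0 (z : C) (p : nat) : z ^+ p = 1 -> z != 1 -> \sum_(t < p) z ^+ t = 0.
Proof.
move=> Hp Hz; have := subrX1 z p; rewrite Hp subrr => /esym/eqP.
by rewrite mulf_eq0 subr_eq0 (negbTE Hz) /= => /eqP.
Qed.

Lemma cos2pi_p {p : nat} : (1 < p)%N -> cos ((pi *+ 2) / p%:R) < (1 : R).
Proof.
move=> Hp.
have Hp0 : (0 : R) < p%:R by rewrite ltr0n; apply: leq_trans Hp.
have -> : (pi *+ 2) / p%:R = (pi / p%:R) *+ 2 :> R by rewrite !mulr2n mulrDl.
rewrite cos_mulr2n cos2sin2.
have : 0 < sin (pi / p%:R : R).
  apply: sin_gt0_pi; apply/andP; split; first by rewrite divr_gt0 // pi_gt0.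
  rewrite ltr_pdivrMr // -[X in X < _]mulr1 ltr_pM2l ?pi_gt0 //.
  by rewrite ltr1n.
move=> H; rewrite mulr2n.
have : 0 < sin (pi / p%:R : R) ^+ 2 by rewrite exprn_gt0.
lra.
Qed.

Lemma omega (p rho : nat) (u : R) : (1 < p)%N ->
  (u = (pi *+ 2) * (rho%:R + 1 / p%:R) \/ u = - ((pi *+ 2) * (rho%:R + 1 / p%:R))) ->
  expj u ^+ p = 1 /\ expj u != 1.
Proof.
move=> Hp Hu.
have Hp0 : (p%:R : R) != 0 by rewrite pnatr_eq0 -lt0n; apply: leq_trans Hp.
set v := (pi *+ 2) * (rho%:R + 1 / p%:R) in Hu.
have Hv : expj v ^+ p = 1.
  rewrite -expjMn.
  have -> : p%:R * v = (p * rho + 1)%N%:R * (pi *+ 2) :> R.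
    rewrite /v natrD natrM; field; exact: Hp0.
  exact: expj2pin.
have Hcos : cos v = cos ((pi *+ 2) / p%:R).
  have E : v = rho%:R * (pi *+ 2) + (pi *+ 2) / p%:R by rewrite /v; field; exact: Hp0.
  have H1 := expj2pin R rho.
  have Hc : cos (rho%:R * (pi *+ 2)) = (1 : R) by move: H1; rewrite /expj => -[].
  have Hs : sin (rho%:R * (pi *+ 2)) = (0 : R) by move: H1; rewrite /expj => -[].
  by rewrite E cosD Hc Hs mul1r mul0r subr0.
have Hlt := cos2pi_p Hp.
case: Hu => ->; split => //.
- apply/eqP => H; have : complex.Re (expj v) = complex.Re (1 : C) by rewrite H.
  rewrite /= Hcos => E; by move: Hlt; rewrite E ltxx.
- have := expjN R v; move/(congr1 (fun z => z ^+ p)); rewrite exprMn Hv mulr1 expr1n.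
  by move=> ->.
- apply/eqP => H; have : complex.Re (expj (- v)) = complex.Re (1 : C) by rewrite H.
  rewrite /= cosN Hcos => E; by move: Hlt; rewrite E ltxx.
Qed.

End Omega.

Section Radix.
Variable R : realType.
Local Notation C := R[i].
Variable fac : seq nat.
Hypothesis Hpos : forall j, (0 < nth 1%N fac j)%N.

Lemma radixS j : radix fac j.+1 = (radix fac j * nth 1%N fac j)%N.
Proof. by rewrite /radix big_ord_recr. Qed.

Lemma radix0 : radix fac 0 = 1%N.
Proof. by rewrite /radix big_ord0. Qed.

Lemma radix_gt0 j : (0 < radix fac j)%N.
Proof. elim: j => [|j IH]; first by rewrite radix0. by rewrite radixS muln_gt0 IH Hpos. Qed.

Lemma radix_dvd j k : (j <= k)%N -> (radix fac j %| radix fac k)%N.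
Proof.
move=> /subnK <-; elim: (k - j)%N => [|n IH]; first by rewrite add0n.
by rewrite addSn radixS dvdn_mulr.
Qed.

Lemma digitE m j : ((digit fac m j)%:R : R)
   = (m %/ radix fac j)%N%:R - (nth 1%N fac j)%:R * (m %/ radix fac j.+1)%N%:R.
Proof.
rewrite /digit radixS divnMA.
set n := (m %/ radix fac j)%N; set p := nth 1%N fac j.
have E : (n%:R : R) = (n %/ p)%N%:R * p%:R + (n %% p)%N%:R by rewrite -natrM -natrD -divn_eq.
rewrite E; ring.
Qed.

Lemma tele (b : nat -> bool) (d : nat -> R) : b 0%N = true -> (forall j, b j.+1 -> b j) ->
  forall n,
  (b n -> \sum_(j < n) ((b j)%:R - (nth 1%N fac j)%:R * (b j.+1)%:R) * d j = - Sprev fac d n) /\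
  (~~ b n -> exists2 i, (i < n)%N &
      \sum_(j < n) ((b j)%:R - (nth 1%N fac j)%:R * (b j.+1)%:R) * d j = d i - Sprev fac d i).
Proof.
move=> b0 bdec; elim => [|n [IH1 IH2]].
  by rewrite big_ord0 /Sprev big_ord0 oppr0; split => //; rewrite b0.
have SP : Sprev fac d n.+1 = Sprev fac d n + ((nth 1%N fac n)%:R - 1) * d n by rewrite /Sprev big_ord_recr.
rewrite big_ord_recr /= SP.
case Hbn1 : (b n.+1).
  split => // _. rewrite (IH1 (bdec _ Hbn1)) (bdec _ Hbn1) /=; ring.
split => // _; case Hbn : (b n).
  by exists n => //; rewrite (IH1 Hbn) /=; ring.
have [i Hi ->] := IH2 (negbT Hbn).
by exists i; [apply: ltnW | rewrite /=; ring].
Qed.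

Lemma apv_step (d : nat -> R) m : (m.+1 < radix fac (size fac))%N ->
  exists2 i, (i < size fac)%N & apv fac d m.+1 - apv fac d m = d i - Sprev fac d i.
Proof.
move=> Hm.
pose b j := (radix fac j %| m.+1)%N.
have b0 : b 0%N = true by rewrite /b radix0 dvd1n.
have bdec : forall j, b j.+1 -> b j.
  by move=> j; rewrite /b; apply: dvdn_trans; apply: radix_dvd.
have bI : ~~ b (size fac).
  apply/negP; rewrite /b => /dvdn_leq H; have := H (ltn0Sn m).
  by rewrite leqNgt Hm.
have [_ H2] := @tele b d b0 bdec (size fac).
have [i Hi E] := H2 bI.
exists i => //; rewrite -E /apv -sumrB; apply: eq_bigr => j _.
rewrite -mulrBl !digitE; congr (_ * _).
have dS : forall k, ((m.+1 %/ radix fac k)%N%:R : R) = (b k)%:R + (m %/ radix fac k)%N%:R.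
  by move=> k; rewrite divnS ?radix_gt0 // natrD.
rewrite !dS; ring.
Qed.

Lemma sum_split (V : zmodType) (A B : nat) (F : nat -> V) :
  \sum_(m < A * B) F m = \sum_(s < B) \sum_(a < A) F (a + s * A)%N.
Proof.
rewrite -(big_mkord xpredT F) mulnC big_nat_mul big_mkord.
apply: eq_bigr => s _.
rewrite -{1}(add0n (s * A)%N) big_addn mulSn addnK big_mkord.
by [].
Qed.

End Radix.

Section Orth.
Variable R : realType.
Local Notation C := R[i].
Variable fac : seq nat.
Hypothesis Hpos : forall j, (0 < nth 1%N fac j)%N.

Lemma digit_shift i0 a t s j :
  let A := radix fac i0 in let p := nth 1%N fac i0 in
  (a < A)%N -> (t < p)%N ->
  digit fac (a + t * A + s * (A * p)) j = (digit fac (a + s * (A * p)) j + (j == i0) * t)%N.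
Proof.
move=> A p Ha Ht.
have HA : (0 < A)%N by apply: radix_gt0.
have Hp : (0 < p)%N by apply: Hpos.
case: (ltngtP j i0) => Hj.
- rewrite /= mul0n addn0 /digit !modn_divl (mulnC (nth 1%N fac j)) -(radixS fac j).
  set D := radix fac j.+1.
  have HD : (D %| A)%N by apply: radix_dvd.
  have key : forall k, ((a + k * A) %% D = a %% D)%N.
    by move=> k; rewrite -(divnK HD) mulnA addnC modnMDl.
  have -> : (a + t * A + s * (A * p) = a + (t + s * p) * A)%N by nia.
  have -> : (a + s * (A * p) = a + (s * p) * A)%N by nia.
  by rewrite !key.
- rewrite /= mul0n addn0 /digit.
  have HD : (A * p %| radix fac j)%N by rewrite -radixS; apply: radix_dvd.
  have -> : (a + t * A + s * (A * p) = s * (A * p) + (a + t * A))%N by nia.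
  have -> : (a + s * (A * p) = s * (A * p) + a)%N by nia.
  have HAp : (a + t * A < A * p)%N.
    have : (t.+1 * A <= p * A)%N by rewrite leq_mul2r Ht orbT.
    nia.
  have HAp' : (a < A * p)%N by nia.
  have HAp0 : (0 < A * p)%N by rewrite muln_gt0 HA Hp.
  move: HAp HAp' HAp0 HD; set Ap := (A * p)%N => HAp HAp' HAp0 HD; clearbody Ap.
  rewrite -(divnK HD) (mulnC (radix fac j %/ Ap)%N) !divnMA.
  by rewrite !divnMDl // (divn_small HAp) (divn_small HAp') !addn0.
- rewrite Hj /= mul1n /digit.
  have -> : (a + t * A + s * (A * p) = (s * p + t) * A + a)%N by nia.
  have -> : (a + s * (A * p) = (s * p) * A + a)%N by nia.
  rewrite !divnMDl // !divn_small // !addn0 modnMDl modnMl modn_small //.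
Qed.

Lemma apv_shift (d : nat -> R) i0 a t s : (i0 < size fac)%N ->
  let A := radix fac i0 in let p := nth 1%N fac i0 in
  (a < A)%N -> (t < p)%N ->
  apv fac d (a + t * A + s * (A * p)) = apv fac d (a + s * (A * p)) + t%:R * d i0.
Proof.
move=> Hi0 A p Ha Ht; rewrite /apv.
under eq_bigr => j _ do rewrite (@digit_shift i0 a t s j Ha Ht) natrD mulrDl.
rewrite big_split /=; congr (_ + _).
rewrite (bigD1 (Ordinal Hi0)) //= eqxx mul1n big1 ?addr0 // => j Hj.
have -> : (nat_of_ord j == i0) = false.
  by apply/negbTE; apply: contra Hj => /eqP E; apply/eqP; apply: val_inj.
by rewrite mul0n mul0r.
Qed.

Lemma orth (d : nat -> R) (c : R) i0 : (i0 < size fac)%N ->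
  expj (c * d i0) ^+ nth 1%N fac i0 = 1 -> expj (c * d i0) != 1 ->
  forall Mx, Mx = radix fac (size fac) -> \sum_(m < Mx) expj (c * apv fac d m) = 0.
Proof.
move=> Hi0 H1 H2 Mx EM.
set A := radix fac i0; set p := nth 1%N fac i0.
have Hdvd : (A * p %| radix fac (size fac))%N by rewrite -radixS; apply: radix_dvd.
have EM' : Mx = ((A * p) * (radix fac (size fac) %/ (A * p)))%N by rewrite EM mulnC divnK.
rewrite EM' (@sum_split C _ _ (fun m => expj (c * apv fac d m))); apply: big1 => s _.
rewrite (@sum_split C _ _ (fun u => expj (c * apv fac d (u + s * (A * p))%N))) exchange_big /=; apply: big1 => a _.
under eq_bigr => t _ do rewrite (@apv_shift d i0 a t s Hi0 (ltn_ord a) (ltn_ord t)) mulrDr expjD mulrCA expjMn.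
by rewrite -mulr_sumr geo0 ?mulr0.
Qed.

End Orth.

Lemma pf_prime n j : (j < size (pfactors n))%N -> prime (nth 1%N (pfactors n) j).
Proof.
move=> Hj; have := mem_nth 1%N Hj; set x := nth _ _ _.
rewrite /pfactors => /flattenP [s /mapP [[p e] He ->]] /=.
move/nseqP => [-> _]. by have [] := mem_prime_decomp He.
Qed.

Lemma pf_pos n j : (0 < nth 1%N (pfactors n) j)%N.
Proof.
case: (ltnP j (size (pfactors n))) => Hj.
  by apply: prime_gt0; apply: pf_prime.
by rewrite nth_default.
Qed.

Lemma pf_ge2 n j : (j < size (pfactors n))%N -> (1 < nth 1%N (pfactors n) j)%N.
Proof. by move=> Hj; apply: prime_gt1; apply: pf_prime. Qed.

Lemma radix_pf n : (0 < n)%N -> radix (pfactors n) (size (pfactors n)) = n.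
Proof.
move=> Hn; rewrite /radix -(big_mkord xpredT (fun j => nth 1%N (pfactors n) j)).
rewrite -(big_nth 1%N xpredT id) /pfactors big_flatten /= big_map.
rewrite {2}(prod_prime_decomp Hn); apply: eq_bigr => -[p e] _ /=.
by rewrite big_nseq iter_muln muln1.
Qed.

Section Chan.
Variable R : realType.
Local Notation C := R[i].
Variables (M N K : nat) (lam : R) (b : 'I_K -> C) (theta phi : 'I_K -> R)
  (x : 'I_M -> R) (y : 'I_N -> R).

Lemma conjcM (u v : C) : conjc (u * v) = conjc u * conjc v.
Proof. by case: u => a1 b1; case: v => a2 b2; simpc; congr Complex; ring. Qed.

Lemma inner_chan k q :
  inner (chan lam b theta phi x y k) (chan lam b theta phi x y q)
  = conjc (b k) * b q *
    ((\sum_(m < M) expj ((- (2 * pi / lam) * (theta q - theta k)) * x m)) *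
     (\sum_(n < N) expj ((- (2 * pi / lam) * (phi q - phi k)) * y n))).
Proof.
rewrite big_distrlr mulr_sumr /inner; apply: eq_bigr => m _.
rewrite mulr_sumr; apply: eq_bigr => n _.
rewrite /chan !conjcM !conj_expj.
have -> : expj ((- (2 * pi / lam) * (theta q - theta k)) * x m)
  = expj (- (- (2 * pi / lam) * x m * theta k)) * expj (- (2 * pi / lam) * x m * theta q).
  by rewrite -expjD; congr expj; ring.
have -> : expj ((- (2 * pi / lam) * (phi q - phi k)) * y n)
  = expj (- (- (2 * pi / lam) * y n * phi k)) * expj (- (2 * pi / lam) * y n * phi q).
  by rewrite -expjD; congr expj; ring.
by rewrite mulrACA [X in X * _]mulrACA -mulrA.
Qed.

Lemma norm2_chan k : norm2 (chan lam b theta phi x y k) = (M * N)%:R * abs2 (b k).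
Proof.
rewrite /norm2 /chan.
under eq_bigr => m _ do under eq_bigr => n _ do rewrite !abs2M !abs2_expj !mulr1.
rewrite sumr_const sumr_const !card_ord. by rewrite -mulrnA mulr_natl mulnC.
Qed.

End Chan.

Lemma inner_self (R : realType) M N (w : 'I_M -> 'I_N -> R[i]) :
  inner w w = ((norm2 w)%:C)%C.
Proof.
rewrite /inner /norm2 rmorph_sum; apply: eq_bigr => m _.
rewrite rmorph_sum; apply: eq_bigr => n _; exact: conjM_abs2.
Qed.

Lemma CS2 (R : realType) M N (w h : 'I_M -> 'I_N -> R[i]) :
  abs2 (inner w h) <= norm2 w * norm2 h.
Proof.
rewrite /inner /norm2 !pair_bigA /=.
exact: (@CS R _ (fun p : 'I_M * 'I_N => w p.1 p.2) (fun p => h p.1 p.2)).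
Qed.

Section Pow.
Variable R : realType.

Lemma ln2_gt0 : 0 < ln (2 : R).
Proof. by apply: ln_gt0; rewrite ltr1n. Qed.

Lemma powR2E (r : R) : 2 `^ r = expR (r * ln 2).
Proof. by rewrite /powR pnatr_eq0. Qed.

Lemma pow_le (r s : R) : 0 <= s -> r <= log2 (1 + s) -> 2 `^ r <= 1 + s.
Proof.
move=> Hs; rewrite /log2 ler_pdivlMr ?ln2_gt0 // => H.
rewrite powR2E -[X in _ <= X]lnK; last by rewrite posrE; lra.
by rewrite ler_expR.
Qed.

Lemma log2_pow (r : R) : log2 (2 `^ r) = r.
Proof.
rewrite /log2 ln_powR; have := ln2_gt0; move=> H; field.
by rewrite gt_eqF.
Qed.

Lemma pow_ge1 (r : R) : 0 <= r -> 1 <= 2 `^ r.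
Proof.
move=> Hr; rewrite powR2E; apply: le_trans (expR_ge1Dx _).
by rewrite lerDl mulr_ge0 // ltW // ln2_gt0.
Qed.

End Pow.

Lemma lower_bound (R : realType) M N K (lam sigma2 : R) (b : 'I_K -> R[i])
  (theta phi r : 'I_K -> R) (x : 'I_M -> R) (y : 'I_N -> R)
  (W' : 'I_K -> 'I_M -> 'I_N -> R[i]) (p' : 'I_K -> R) (k : 'I_K) :
  0 < sigma2 -> 0 < abs2 (b k) -> (0 < M)%N -> (0 < N)%N -> (forall q, 0 <= p' q) ->
  r k <= log2 (1 + sinr lam sigma2 b theta phi x y W' p' k) ->
  sigma2 * (2 `^ r k - 1) / ((M * N)%:R * abs2 (b k)) <= p' k.
Proof.
move=> Hs Hb HM HN Hp Hlog.
set A := abs2 (inner (W' k) (chan lam b theta phi x y k)).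
set I := \sum_(q < K | q != k) abs2 (inner (W' k) (chan lam b theta phi x y q)) * p' q.
set n2 := norm2 (W' k).
set MN := ((M * N)%:R : R).
have HMN : 0 < MN by rewrite ltr0n muln_gt0 HM HN.
have HA : 0 <= A by apply: abs2_ge0.
have HI : 0 <= I by apply: sumr_ge0 => q _; rewrite mulr_ge0 // abs2_ge0.
have Hn2 : 0 <= n2 by apply: sumr_ge0 => m _; apply: sumr_ge0 => n _; apply: abs2_ge0.
have HCS : A <= n2 * (MN * abs2 (b k)).
  by rewrite /A /MN -(@norm2_chan R M N K lam b theta phi x y k); apply: CS2.
have Es : sinr lam sigma2 b theta phi x y W' p' k = A * p' k / (I + n2 * sigma2) by [].
move: Hlog; rewrite Es; set s := A * p' k / (I + n2 * sigma2) => Hlog.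
have Hs0 : 0 <= s.
  by apply: divr_ge0; [apply: mulr_ge0 | apply: addr_ge0; [|apply: mulr_ge0; [|apply: ltW]]].
have H2 := @pow_le R _ _ Hs0 Hlog.
have key : s * sigma2 <= MN * abs2 (b k) * p' k.
  have [Hz|Hnz] := eqVneq n2 0.
    have A0 : A = 0 by apply/eqP; rewrite eq_le HA andbT; move: HCS; rewrite Hz mul0r.
    by rewrite /s A0 !mul0r mulr_ge0 // mulr_ge0 // ltW.
  have Hn2p : 0 < n2 by rewrite lt_def Hnz.
  have HD : 0 < I + n2 * sigma2 by rewrite ltr_wpDl // mulr_gt0.
  have E1 : s * (I + n2 * sigma2) = A * p' k by rewrite /s divfK // gt_eqF.
  have E2 : s * (n2 * sigma2) <= A * p' k by rewrite -E1 ler_wpM2l // lerDr.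
  have E3 : A * p' k <= n2 * (MN * abs2 (b k)) * p' k by rewrite ler_wpM2r.
  have E4 : n2 * (s * sigma2) <= n2 * (MN * abs2 (b k) * p' k).
    by move: (le_trans E2 E3); rewrite mulrCA !mulrA.
  by rewrite ler_pM2l in E4.
rewrite ler_pdivrMr ?mulr_gt0 //.
have H3 : sigma2 * (2 `^ r k - 1) <= sigma2 * s.
  by apply: ler_wpM2l; [exact: ltW | lra].
apply: (le_trans H3); rewrite mulrC (mulrC (p' k)); exact: key.
Qed.

Lemma omega_case (R : realType) (lam D : R) (rho p : nat) : lam != 0 -> D != 0 -> (1 < p)%N ->
  let u := (- (2 * pi / lam) * D) * ((rho%:R + 1 / p%:R) * lam / `|D|) in
  expj u ^+ p = 1 /\ expj u != 1.
Proof.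
move=> Hl HD Hp u; apply: (@omega R p rho u Hp).
have Hp0 : (p%:R : R) != 0 by rewrite pnatr_eq0 -lt0n; apply: leq_trans Hp.
case: (ltgtP D 0) => HD'.
- left; rewrite /u (ltr0_norm HD') mulr2n; field.
  by rewrite Hp0 Hl HD.
- right; rewrite /u (gtr0_norm HD') mulr2n; field.
  by rewrite Hp0 Hl HD.
- by move: HD; rewrite HD' eqxx.
Qed.

Theorem theorem3 (R : realType) (M N K : nat)
  (lam sigma2 dminx dminy : R) (b : 'I_K -> R[i]) (theta phi r : 'I_K -> R)
  (HM : (0 < M)%N) (HN : (0 < N)%N)
  (Hlam : 0 < lam) (Hsigma : 0 < sigma2) (Hdx : 0 < dminx) (Hdy : 0 < dminy)
  (Hb : forall k, b k != 0)
  (Htheta : forall k, -1 <= theta k <= 1) (Hphi : forall k, -1 <= phi k <= 1)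
  (Htheta_inj : injective theta) (Hphi_inj : injective phi)
  (Hr : forall k, 0 <= r k)
  (HK : (K * (K - 1) %/ 2 <= size (pfactors M) + size (pfactors N))%N)
  (P1 P2 : seq ('I_K * 'I_K))
  (Hpart : perm_eq (P1 ++ P2) (user_pairs K))
  (HP1 : (size P1 <= size (pfactors M))%N) (HP2 : (size P2 <= size (pfactors N))%N)
  (dx dy : nat -> R)
  (Hdxs : dvec_spec (pfactors M) [seq `|theta kq.1 - theta kq.2| | kq <- P1] lam dminx dx)
  (Hdys : dvec_spec (pfactors N) [seq `|phi kq.1 - phi kq.2| | kq <- P2] lam dminy dy) :
  let xs := fun m : 'I_M => apv (pfactors M) dx m in
  let ys := fun n : 'I_N => apv (pfactors N) dy n in
  exists (W : 'I_K -> 'I_M -> 'I_N -> R[i]) (p : 'I_K -> R),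
    feasible lam sigma2 dminx dminy b theta phi r xs ys W p /\
    \sum_(k < K) p k
      = \sum_(k < K) sigma2 * (2 `^ r k - 1) / ((M * N)%:R * abs2 (b k)) /\
    (forall (x : 'I_M -> R) (y : 'I_N -> R) (W' : 'I_K -> 'I_M -> 'I_N -> R[i])
            (p' : 'I_K -> R),
       feasible lam sigma2 dminx dminy b theta phi r x y W' p' ->
       \sum_(k < K) p k <= \sum_(k < K) p' k).
Proof.
move=> xs ys.
have HMN : 0 < ((M * N)%:R : R) by rewrite ltr0n muln_gt0 HM HN.
have Hl0 : lam != 0 by rewrite gt_eqF.
have Hbeta : forall k, 0 < abs2 (b k).
  move=> k; rewrite lt_def abs2_ge0 andbT; apply/eqP => H.
  by move: (Hb k); rewrite (@abs2_eq0 R _ H) eqxx.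
have Hu : forall k q : 'I_K, (k < q)%N -> (k, q) \in user_pairs K.
  move=> k' q' Hlt; rewrite /user_pairs mem_filter /= Hlt /=.
  by apply: allpairs_f; rewrite mem_enum.
have Hpair : forall k q : 'I_K, k != q ->
    exists2 kq, kq \in P1 ++ P2 & (kq = (k, q) \/ kq = (q, k)).
  move=> k q Hkq; case: (ltngtP k q) => H.
  - by exists (k, q); [rewrite (perm_mem Hpart); apply: Hu | left].
  - by exists (q, k); [rewrite (perm_mem Hpart); apply: Hu | right].
  - have E : k = q by apply: val_inj.
    by move: Hkq; rewrite E eqxx.
have Hx0 : forall (k q : 'I_K) kq, k != q -> kq \in P1 -> (kq = (k, q) \/ kq = (q, k)) ->
    \sum_(m < M) expj ((- (2 * pi / lam) * (theta q - theta k)) * xs m) = 0.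
  move=> k q kq Hkq Hin Hor.
  set i := index kq P1.
  have Hi : (i < size P1)%N by rewrite index_mem.
  have Hif : (i < size (pfactors M))%N by apply: leq_trans HP1.
  have := Hdxs i Hif; rewrite size_map Hi => -[rho [Hd _]].
  rewrite (nth_map kq) // nth_index // in Hd.
  have Hdelta : `|theta kq.1 - theta kq.2| = `|theta q - theta k|.
    by case: Hor => ->; rewrite //= distrC.
  rewrite Hdelta in Hd.
  have HD : theta q - theta k != 0.
    by rewrite subr_eq0; apply: contra Hkq => /eqP /Htheta_inj ->.
  have [H1 H2] := @omega_case R _ _ rho _ Hl0 HD (@pf_ge2 _ _ Hif).
  rewrite -Hd in H1 H2.
  have HH := @orth R (pfactors M) (@pf_pos M) dx _ i Hif H1 H2 M (esym (@radix_pf M HM)).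
  exact: HH.
have Hy0 : forall (k q : 'I_K) kq, k != q -> kq \in P2 -> (kq = (k, q) \/ kq = (q, k)) ->
    \sum_(n < N) expj ((- (2 * pi / lam) * (phi q - phi k)) * ys n) = 0.
  move=> k q kq Hkq Hin Hor.
  set i := index kq P2.
  have Hi : (i < size P2)%N by rewrite index_mem.
  have Hif : (i < size (pfactors N))%N by apply: leq_trans HP2.
  have := Hdys i Hif; rewrite size_map Hi => -[rho [Hd _]].
  rewrite (nth_map kq) // nth_index // in Hd.
  have Hdelta : `|phi kq.1 - phi kq.2| = `|phi q - phi k|.
    by case: Hor => ->; rewrite //= distrC.
  rewrite Hdelta in Hd.
  have HD : phi q - phi k != 0.
    by rewrite subr_eq0; apply: contra Hkq => /eqP /Hphi_inj ->.
  have [H1 H2] := @omega_case R _ _ rho _ Hl0 HD (@pf_ge2 _ _ Hif).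
  rewrite -Hd in H1 H2.
  exact: (@orth R (pfactors N) (@pf_pos N) dy _ i Hif H1 H2 N (esym (@radix_pf N HN))).
have Horth : forall k q : 'I_K, k != q ->
    inner (chan lam b theta phi xs ys k) (chan lam b theta phi xs ys q) = 0.
  move=> k q Hkq; rewrite inner_chan.
  have [kq Hin Hor] := Hpair k q Hkq.
  rewrite mem_cat in Hin; case/orP: Hin => Hin.
  - by rewrite (Hx0 k q kq Hkq Hin Hor) mul0r mulr0.
  - by rewrite (Hy0 k q kq Hkq Hin Hor) mulr0 mulr0.
pose p := fun k => sigma2 * (2 `^ r k - 1) / ((M * N)%:R * abs2 (b k)).
exists (chan lam b theta phi xs ys), p.
split; last split.
- split; last split; last split.
  + move=> k.
    have -> : sinr lam sigma2 b theta phi xs ys (chan lam b theta phi xs ys) p k = 2 `^ r k - 1.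
      rewrite /sinr /= big1; last by move=> q Hq; rewrite Horth ?abs20 ?mul0r // eq_sym.
      rewrite add0r inner_self abs2_real norm2_chan /p.
      have := Hbeta k; have := HMN; move=> h1 h2.
      field; rewrite ?gt_eqF // ?mulr_gt0 // ?ltr0n //.
    by rewrite addrC subrK log2_pow.
  + move=> k; rewrite /p; apply: divr_ge0; last by apply: mulr_ge0; apply: ltW.
    by apply: mulr_ge0; [apply: ltW | rewrite subr_ge0; exact: pow_ge1].
  + move=> m1 m2 Hm; rewrite /xs Hm.
    have Hlt : (m1.+1 < radix (pfactors M) (size (pfactors M)))%N by rewrite (@radix_pf M HM) -Hm ltn_ord.
    have [i Hi ->] := @apv_step R (pfactors M) (@pf_pos M) dx m1 Hlt.
    have := Hdxs i Hi; case: ifP => _.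
      by move=> [rho [_ [H _]]]; lra.
    by move=> H; lra.
  + move=> n1 n2 Hn; rewrite /ys Hn.
    have Hlt : (n1.+1 < radix (pfactors N) (size (pfactors N)))%N by rewrite (@radix_pf N HN) -Hn ltn_ord.
    have [i Hi ->] := @apv_step R (pfactors N) (@pf_pos N) dy n1 Hlt.
    have := Hdys i Hi; case: ifP => _.
      by move=> [rho [_ [H _]]]; lra.
    by move=> H; lra.
- by [].
- move=> x y W' p' [Hf1 [Hf2 _]]; apply: ler_sum => k _.
  exact: lower_bound.
Qed.
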